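(* The algorithm SCHEMATIC-ALGO$(G,\mu^*,m^*,\Delta^*,\gamma)$ (described in the context) runs for at most $O(\beta^2\cdot\mu(G))$ rounds.
   Context: Let $G=(V,E)$ be a graph with $n$ vertices, $m$ edges, average degree $d$; $\mu(G)$ is its maximum matching size. Fix a small constant $\epsilon\in(0,1)$ and $\beta:=1/\Theta(\epsilon^3)$. For $H\subseteq E$ and a pair $e=(u,v)$, $\deg_e(H):=\deg_u(H)+\deg_v(H)$. An edge $e$ is underfull w.r.t. $H$ if $\deg_e(H)<(1-\epsilon)\beta$ and overfull w.r.t. $H$ if $\deg_e(H)>\beta$. The parameters satisfy $\mu(G)/(2+\epsilon)\le\mu^*\le n$, $d\le\Delta^*\le n$, $m^*\ge m$, $0<\gamma<1$. SCHEMATIC-ALGO: set $H\leftarrow\emptyset$. Repeat rounds: in each round set Status $\leftarrow$ false; for $i=1,\dots,(100m^*\log n)/(\mu^*(\Delta^* )^\gamma)$, sample an edge $e\in E$ uniformly at random (independently, with repetition); if $e\in E\setminus H$ and $e$ is underfull w.r.t. $H$, then set Status $\leftarrow$ true, $H\leftarrow H\cup\{e\}$, and then while some edge of $H$ is overfull w.r.t. $H$, remove such an edge from $H$. If at the end of a round Status is false, stop the rounds (this is the last round). Then let $U$ be the set of edges of $E\setminus H$ underfull w.r.t. $H$, take any $V_{small}\subseteq V$ with $\{v:\deg_v(U)\le (1-\epsilon)(\Delta^* )^\gamma/\epsilon\}\subseteq V_{small}\subseteq\{v:\deg_v(U)\le(1+\epsilon)(\Delta^* )^\gamma/\epsilon\}$,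 let $E_{small}:=\{(u,v)\in H\cup U: u,v\in V_{small}\}$, and return $\mu(E_{small})$. *)

(* Defs.v *)
From HB Require Import structures.
From mathcomp Require Import all_boot all_order all_algebra.
From mathcomp Require Import reals exp.
Set Implicit Arguments. Unset Strict Implicit. Unset Printing Implicit Defensive.
Import Order.TTheory GRing.Theory Num.Theory.
Local Open Scope ring_scope.

Section Defs.
Variable T : finType.

(* A simple graph on vertex set T is given by its edge set E: every edge is a
   2-element subset of T. Subgraphs H are subsets of E. *)
Definition simple_graph (E : {set {set T}}) : Prop :=
  forall e, e \in E -> #|e| = 2%N.

Definition degv (H : {set {set T}}) (v : T) : nat := #|[set f in H | v \in f]|.
Definition dege (H : {set {set T}}) (e : {set T}) : nat := (\sum_(v in e) degv H v)%N.

Definition is_matching (E M : {set {set T}}) : bool :=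
  (M \subset E) && [forall e in M, forall f in M, (e != f) ==> [disjoint e & f]].
Definition mu (E : {set {set T}}) : nat :=
  (\max_(M : {set {set T}} | is_matching E M) #|M|)%N.

Variable R : realType.

Definition underfull (eps beta : R) (H : {set {set T}}) (e : {set T}) : Prop :=
  (dege H e)%:R < (1 - eps) * beta.
Definition overfull (beta : R) (H : {set {set T}}) (e : {set T}) : Prop :=
  beta < (dege H e)%:R.

Definition remove_step (beta : R) (H H' : {set {set T}}) : Prop :=
  exists2 f, f \in H & overfull beta H f /\ H' = H :\ f.

(* "while some edge of H is overfull w.r.t. H, remove such an edge":
   any sequence of such removals that ends with no overfull edge in H. *)
Inductive cleanup (beta : R) : {set {set T}} -> {set {set T}} -> Prop :=
| cleanup_done (H : {set {set T}}) : (forall f : {set T}, f \in H -> ~ overfull beta H f) -> cleanup beta H H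
| cleanup_step (H H1 H2 : {set {set T}}) : remove_step beta H H1 -> cleanup beta H1 H2 -> cleanup beta H H2.

(* processing one sampled edge e: new subgraph and whether Status was set *)
Definition sample_step (E : {set {set T}}) (eps beta : R)
    (H : {set {set T}}) (e : {set T}) (H' : {set {set T}}) (st : bool) : Prop :=
  ((e \in E :\: H) /\ underfull eps beta H e /\ st = true /\ cleanup beta (e |: H) H')
  \/ (~ ((e \in E :\: H) /\ underfull eps beta H e) /\ st = false /\ H' = H).

(* one round consisting of k sampled edges (each sample an arbitrary edge of E,
   i.e. any possible outcome of the uniform sampling); the returned bool is the
   final value of Status in the round. *)
Inductive round (E : {set {set T}}) (eps beta : R) :
    nat -> {set {set T}} -> {set {set T}} -> bool -> Prop :=
| round0 (H : {set {set T}}) : round E eps beta 0 H H false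
| roundS (k : nat) (H H1 H2 : {set {set T}}) (e : {set T}) (b1 b2 : bool) :
    e \in E -> sample_step E eps beta H e H1 b1 ->
    round E eps beta k H1 H2 b2 -> round E eps beta k.+1 H H2 (b1 || b2).

Definition iters (n : nat) (mstar mustar Deltastar gamma : R) : nat :=
  Num.truncn (100 * mstar * ln (n%:R) / (mustar * powR Deltastar gamma)).

(* reach E eps beta K r H : the first r rounds have been executed, each of them
   ended with Status = true, and the current subgraph is H; hence round r+1 is
   executed.  So "round r+1 is executed" iff reach ... r H for some H. *)
Inductive reach (E : {set {set T}}) (eps beta : R) (K : nat) :
    nat -> {set {set T}} -> Prop :=
| reach0 : reach E eps beta K 0 set0
| reachS (r : nat) (H H' : {set {set T}}) : reach E eps beta K r H -> round E eps beta K H H' true ->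
    reach E eps beta K r.+1 H'.

End Defs.

(* Main.v *)
Require Import Defs.
From HB Require Import structures.
From mathcomp Require Import all_boot all_order all_algebra.
From mathcomp Require Import reals exp.
From mathcomp Require Import ring lra zify.
Import Order.TTheory GRing.Theory Num.Theory.
Set Implicit Arguments. Unset Strict Implicit. Unset Printing Implicit Defensive.
Local Open Scope ring_scope.

Definition Ssq (T : finType) (H : {set {set T}}) : nat :=
  (\sum_(v : T) (degv H v) ^ 2)%N.

Lemma degv_add (T : finType) (H : {set {set T}}) (e : {set T}) (v : T) :
  e \notin H -> degv (e |: H) v = (degv H v + (v \in e))%N.
Proof.
move=> eH; rewrite /degv; case: (boolP (v \in e)) => ve.
  have -> : [set f in e |: H | v \in f] = e |: [set f in H | v \in f].
    by apply/setP => f; rewrite !inE; case: eqP => [->|//]; rewrite ve.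
  by rewrite cardsU1 inE (negbTE eH) /= addnC.
have -> : [set f in e |: H | v \in f] = [set f in H | v \in f].
  by apply/setP => f; rewrite !inE; case: eqP => [->|//]; rewrite /= (negbTE ve) !andbF.
by rewrite addn0.
Qed.

Lemma Ssq_add (T : finType) (H : {set {set T}}) (e : {set T}) :
  e \notin H -> Ssq (e |: H) = (Ssq H + 2 * dege H e + #|e|)%N.
Proof.
move=> eH; rewrite /Ssq /dege.
rewrite (eq_bigr (fun v => degv H v ^ 2 + 2 * (if v \in e then degv H v else 0)
   + (if v \in e then 1 else 0))%N); last first.
  by move=> v _; rewrite degv_add //; case: (v \in e); rewrite ?addn0 ?muln0 ?addn0 //; lia.
rewrite !big_split /= big1_eq addn0 -!big_mkcond /= sum1_card; lia.
Qed.

Lemma dege_add (T : finType) (H : {set {set T}}) (e : {set T}) :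
  e \notin H -> dege (e |: H) e = (dege H e + #|e|)%N.
Proof.
move=> eH; rewrite /dege (eq_bigr (fun v => degv H v + 1)%N).
  by rewrite big_split /= sum1_card.
by move=> v ve; rewrite degv_add // ve.
Qed.

Definition Phi (T : finType) (R : realType) (c : R) (H : {set {set T}}) : R :=
  2 * c * (#|H|)%:R - (Ssq H)%:R.

Lemma Phi_add (T : finType) (R : realType) (c : R) (H : {set {set T}}) (e : {set T}) :
  e \notin H -> #|e| = 2%N ->
  Phi c (e |: H) = Phi c H + 2 * c - 2 * (dege H e)%:R - 2.
Proof.
move=> eH e2; rewrite /Phi Ssq_add // cardsU1 eH e2 /= !natrD; lra.
Qed.

Definition clean (T : finType) (R : realType) (beta : R) (H : {set {set T}}) : Prop :=
  forall f, f \in H -> ~ overfull beta H f.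

Lemma cleanup_inv (T : finType) (R : realType) (E : {set {set T}}) (eps beta : R)
  (H H' : {set {set T}}) :
  simple_graph E -> 0 < eps -> 4 <= eps * beta ->
  cleanup beta H H' -> H \subset E ->
  [/\ H' \subset E, clean beta H' & Phi (beta * (1 - eps / 2)) H <= Phi (beta * (1 - eps / 2)) H'].
Proof.
move=> sE he hb; elim => [H0 cl sub | H0 H1 H2 [f fH [ov e1]] _ IH sub].
  by split.
subst H1.
have sub1 : H0 :\ f \subset E by apply: subset_trans sub; apply: subD1set.
have [s2 c2 p2] := IH sub1; split => //.
apply: le_trans p2.
have f2 : #|f| = 2%N by apply: sE; apply: (subsetP sub).
have fn : f \notin H0 :\ f by rewrite setD11.
have HH : f |: (H0 :\ f) = H0 by rewrite setD1K.
have := Phi_add (beta * (1 - eps / 2)) fn f2; have := dege_add fn; rewrite HH f2 => dd ->.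
move: ov; rewrite /overfull dd natrD => ov.
have hc : beta * (1 - eps / 2) = beta - (eps * beta) / 2 by rewrite mulrBr mulr1 mulrCA mulrA.
rewrite hc; lra.
Qed.

Lemma round_inv (T : finType) (R : realType) (E : {set {set T}}) (eps beta : R)
  (k : nat) (H H' : {set {set T}}) (b : bool) :
  simple_graph E -> 0 < eps -> 4 <= eps * beta ->
  round E eps beta k H H' b -> H \subset E -> clean beta H ->
  [/\ H' \subset E, clean beta H' &
     Phi (beta * (1 - eps / 2)) H + (b : nat)%:R * 2 <= Phi (beta * (1 - eps / 2)) H'].
Proof.
move=> sE he hb; elim => [H0 | k0 H0 H1 H2 e b1 b2 eE ss _ IH] sub cl.
  by split => //; rewrite /= mul0r addr0.
case: ss => [[eD [uf [eb cu]]] | [_ [eb eh]]]; subst.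
  move: eD; rewrite inE => /andP [eH _].
  have f2 : #|e| = 2%N by apply: sE.
  have sub1 : e |: H0 \subset E by rewrite subUset sub1set eE sub.
  have [s1 c1 p1] := cleanup_inv sE he hb cu sub1.
  have [s2 c2 p2] := IH s1 c1.
  split => //.
  move: p1; rewrite Phi_add // => p1.
  move: uf; rewrite /underfull => uf.
  have hc : beta * (1 - eps / 2) = beta - (eps * beta) / 2 by rewrite mulrBr mulr1 mulrCA mulrA.
  move: p1 p2; rewrite hc /= => p1 p2.
  have h0 : 0 <= (b2 : nat)%:R :> R by [].
  have uf' : (dege H0 e)%:R < beta - eps * beta by move: uf; rewrite mulrBl mul1r.
  lra.
have [s2 c2 p2] := IH sub cl; split => //.
Qed.

Lemma reach_inv (T : finType) (R : realType) (E : {set {set T}}) (eps beta : R)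
  (K r : nat) (H : {set {set T}}) :
  simple_graph E -> 0 < eps -> 4 <= eps * beta ->
  reach E eps beta K r H ->
  [/\ H \subset E, clean beta H & 2 * r%:R <= Phi (beta * (1 - eps / 2)) H].
Proof.
move=> sE he hb; elim => [| r0 H0 H1 _ [s0 c0 p0] rd].
  split; first exact: sub0set.
    by move=> f; rewrite inE.
  have -> : Phi (beta * (1 - eps / 2)) (set0 : {set {set T}}) = 0.
    rewrite /Phi /Ssq cards0 big1 ?mulr0 ?subr0 // => v _.
    rewrite /degv; have -> : [set f in (set0 : {set {set T}}) | v \in f] = set0 by apply/setP => f; rewrite !inE.
    by rewrite cards0.
  by rewrite mulr0.
have [s1 c1 p1] := round_inv sE he hb rd s0 c0.
split => //.
rewrite -addn1 natrD /=; move: p1; rewrite /= mul1r => p1; lra.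
Qed.

Lemma cardH_le (T : finType) (R : realType) (E : {set {set T}}) (beta : R)
  (H : {set {set T}}) :
  simple_graph E -> 0 <= beta -> H \subset E -> clean beta H ->
  (#|H|)%:R <= beta * (mu E)%:R.
Proof.
move=> sE b0 sub cl.
have m0 : is_matching H set0.
  by rewrite /is_matching sub0set; apply/forallP => e; rewrite inE.
case: (arg_maxnP (fun M : {set {set T}} => #|M|) m0) => M mM maxM.
move/andP: (mM) => [sMH /forallP mdis].
have sME : is_matching E M.
  rewrite /is_matching (subset_trans sMH sub) /=; exact/forallP.
have muM : (#|M| <= mu E)%N := leq_bigmax_cond (F := fun M : {set {set T}} => #|M|) M sME.
have cover : forall f, f \in H -> exists g, exists v, [/\ g \in M, v \in g & v \in f].
  move=> f fH; have f2 := sE f (subsetP sub f fH).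
  case: (boolP [exists g in M, ~~ [disjoint f & g]]).
    move/existsP => [g /andP [gM]]; rewrite -setI_eq0 => /set0Pn [v].
    by rewrite inE => /andP [vf vg]; exists g, v.
  rewrite negb_exists => /forallP nd; exfalso.
  have fM : f \notin M.
    apply/negP => fM; have := nd f; rewrite fM /= negbK -setI_eq0 setIid => /eqP f0.
    by rewrite f0 cards0 in f2.
  have : is_matching H (f |: M).
    rewrite /is_matching subUset sub1set fH sMH /=.
    apply/forallP => x; apply/implyP => /setU1P xM; apply/forallP => y.
    apply/implyP => /setU1P yM.
    case: xM => [->|xM]; case: yM => [->|yM]; apply/implyP => xy.
    - by rewrite eqxx in xy.
    - by have := nd y; rewrite yM /= negbK.
    - by rewrite disjoint_sym; have := nd x; rewrite xM /= negbK.
    - by move: (mdis x) => /implyP /(_ xM) /forallP /(_ y) /implyP /(_ yM) /implyP /(_ xy).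
  by move=> /maxM /=; rewrite cardsU1 fM add1n ltnn.
have step2 : (#|H| <= \sum_(g in M) dege H g)%N.
  rewrite -sum1_card.
  apply: (@leq_trans (\sum_(f in H) \sum_(g in M) \sum_(v in g) (v \in f))).
    apply: leq_sum => f fH; have [g [v [gM vg vf]]] := cover f fH.
    by rewrite (bigD1 g) //= (bigD1 v) //= vf -addnA leq_addr.
  rewrite exchange_big /=; apply: leq_sum => g gM.
  rewrite exchange_big /= /dege; apply: leq_sum => v vg.
  rewrite /degv -sum1_card.
  rewrite [X in (_ <= X)%N](eq_bigl (fun f => (f \in H) && (v \in f))); last first.
    by move=> f; rewrite inE.
  rewrite big_mkcondr /=; apply: leq_sum => f _; by case: (v \in f).
apply: (@le_trans _ _ (\sum_(g in M) (dege H g)%:R)).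
  by rewrite -natr_sum ler_nat.
apply: (@le_trans _ _ (\sum_(g in M) beta)).
  apply: ler_sum => g gM; rewrite leNgt; apply/negP => ov.
  exact: (cl g (subsetP sMH g gM)).
rewrite sumr_const -[beta *+ _]mulr_natr; apply: ler_wpM2l => //; by rewrite ler_nat.
Qed.

Theorem lemma3p1 (R : realType) :
  exists c0 C : R, 0 < c0 /\ 0 < C /\
  forall (T : finType) (E : {set {set T}}) (eps beta mustar Deltastar mstar gamma : R),
    simple_graph E -> (0 < #|E|)%N ->
    0 < eps < 1 -> c0 / eps ^+ 3 <= beta ->
    (mu E)%:R / (2 + eps) <= mustar <= #|T|%:R ->
    (2 * #|E|%:R) / #|T|%:R <= Deltastar <= #|T|%:R ->
    #|E|%:R <= mstar ->
    0 < gamma < 1 ->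
    forall (r : nat) (H : {set {set T}}),
      reach E eps beta (iters #|T| mstar mustar Deltastar gamma) r H ->
      (r.+1)%:R <= C * beta ^+ 2 * (mu E)%:R.
Proof.
exists 4, 2; split; first lra; split; first lra.
move=> T E eps beta mus Ds ms gam sE E0 /andP [e0 e1] hb _ _ _ _ r H rch.
have e3 : 0 < eps ^+ 3 by rewrite exprn_gt0.
move: hb; rewrite ler_pdivrMr // => hb.
have e3le : eps ^+ 3 <= eps.
  rewrite exprS; apply: ler_piMr; first lra.
  apply: exprn_ile1; lra.
have bpos : 0 < beta.
  rewrite ltNge; apply/negP => bn.
  have : beta * eps ^+ 3 <= 0 by rewrite mulr_le0_ge0 //; lra.
  lra.
have hb2 : 4 <= eps * beta.
  apply: (le_trans hb); rewrite mulrC; apply: ler_wpM2r => //; lra.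
have b4 : 4 <= beta.
  apply: (le_trans hb2); rewrite mulrC; apply: ler_piMr; lra.
have mu1 : (1 <= mu E)%N.
  move: E0; rewrite card_gt0 => /set0Pn [e eE].
  have me : is_matching E [set e].
    rewrite /is_matching sub1set eE /=.
    apply/forallP => x; apply/implyP; rewrite inE => /eqP ->.
    apply/forallP => y; apply/implyP; rewrite inE => /eqP ->.
    by rewrite eqxx.
  have := leq_bigmax_cond (F := fun M : {set {set T}} => #|M|) [set e] me.
  by rewrite cards1.
have [s c p] := reach_inv sE e0 hb2 rch.
have hH := cardH_le sE (ltW bpos) s c.
have hc : beta * (1 - eps / 2) <= beta.
  apply: ler_piMr; lra.
have hP : Phi (beta * (1 - eps / 2)) H <= 2 * beta * (#|H|)%:R.
  rewrite /Phi.
  have h0 : 0 <= (Ssq H)%:R :> R by [].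
  have h1 : 0 <= (#|H|)%:R :> R by [].
  have : 2 * (beta * (1 - eps / 2)) * (#|H|)%:R <= 2 * beta * (#|H|)%:R.
    apply: ler_wpM2r => //; lra.
  lra.
have hB : 2 * beta * (#|H|)%:R <= 2 * beta * (beta * (mu E)%:R).
  apply: ler_wpM2l => //; lra.
have mu1' : 1 <= (mu E)%:R :> R by rewrite (ler_nat R 1).
have hX : 1 <= beta ^+ 2 * (mu E)%:R.
  have : 1 <= beta ^+ 2 by rewrite expr2; nra.
  nra.
have -> : 2 * beta ^+ 2 * (mu E)%:R = 2 * (beta * (beta * (mu E)%:R)) by rewrite expr2; ring.
rewrite -addn1 natrD.
have : beta ^+ 2 * (mu E)%:R = beta * (beta * (mu E)%:R) by rewrite expr2 mulrA.
lra.
Qed.
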